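(* Let $n\ge 3$ and let $\mathcal{P}_E(D_{2n})$ be the enhanced power graph of the dihedral group $D_{2n}$. Then the Sombor spectrum of $\mathcal{P}_E(D_{2n})$ consists of $-(n-1)\sqrt2$ with multiplicity $n-2$, $0$ with multiplicity $n-1$, and the three roots (with multiplicity) of \[x^2\big(x-(n-1)(n-2)\sqrt2\big)-(n-1)(5n^2-6n+2)x-2n(2n^2-2n+1)\big(x-(n-1)(n-2)\sqrt2\big).\]
   Context: For a finite simple graph $\Gamma$ with vertices $u_1,\dots,u_N$, the Sombor matrix $S(\Gamma)$ has $(i,j)$ entry $\sqrt{\deg(u_i)^2+\deg(u_j)^2}$ if $u_i,u_j$ are adjacent and $0$ otherwise; the Sombor spectrum is the multiset of its eigenvalues. $D_{2n}=\langle a,b: a^n=b^2=e,\ ba=a^{-1}b\rangle$. The enhanced power graph $\mathcal{P}_E(G)$ of a group $G$ has vertex set $G$, two distinct vertices being adjacent iff both belong to a common cyclic subgroup of $G$. *)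

(* Defs.v *)
From mathcomp Require Import all_boot all_order all_algebra all_fingroup all_solvable.
Set Implicit Arguments. Unset Strict Implicit. Unset Printing Implicit Defensive.
Import GRing.Theory Num.Theory.
Local Open Scope ring_scope.

Definition epg_adj (gT : finGroupType) (x y : gT) : bool :=
  (x != y) && [exists z : gT, (x \in <[z]>%g) && (y \in <[z]>%g)].

Definition gdeg (T : finType) (e : rel T) (x : T) : nat := #|[set y | e x y]|.

Definition sombor_matrix (R : rcfType) (T : finType) (e : rel T) : 'M[R]_#|T| :=
  \matrix_(i, j) (if e (enum_val i) (enum_val j)
                  then Num.sqrt (((gdeg e (enum_val i)) ^ 2)%:R
                                 + ((gdeg e (enum_val j)) ^ 2)%:R)
                  else 0).

(* Main.v *)
Require Import Defs.
From mathcomp Require Import all_boot all_order all_algebra all_fingroup all_solvable.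
From mathcomp Require Import ring lra zify.
Import GRing.Theory Num.Theory.
Local Open Scope ring_scope.

Lemma det3 (R : comNzRingType) (f : nat -> nat -> R) :
  \det (\matrix_(i < 3, j < 3) f i j) = f 0 0 * (f 1 1 * f 2 2 - f 1 2 * f 2 1)
         - f 0 1 * (f 1 0 * f 2 2 - f 1 2 * f 2 0)
         + f 0 2 * (f 1 0 * f 2 1 - f 1 1 * f 2 0).
Proof.
rewrite (expand_det_row _ 0) !big_ord_recl big_ord0 /cofactor.
rewrite !(expand_det_row _ 0) !big_ord_recl !big_ord0 /cofactor.
rewrite !det_mx11 !mxE /= expr0 expr1. ring.
Qed.

Lemma sumr_constI (V : nmodType) (m : nat) (x : V) : \sum_(i < m) x = x *+ m.
Proof. by rewrite sumr_const card_ord. Qed.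

Section Mat.
Variables (R : comNzRingType) (p q : nat) (a b c0 : R).
Local Notation K := (p + q)%N.
Definition kind (i : nat) : nat :=
  if i == 0%N then 0%N else if i == 1%N then 1%N else if i == 2%N then 2%N
  else if (i < 3 + p)%N then 1%N else 2%N.
Definition W (k1 k2 : nat) : R :=
  match k1, k2 with O, S O | S O, O => a | O, S (S O) | S (S O), O => b | S O, S O => c0 | _, _ => 0 end.
Definition Mx : 'M[{poly R}]_(3 + K) :=
  \matrix_(i, j) ('X *+ (i == j) - (if i == j then 0 else W (kind i) (kind j))%:P).

Lemma kindR i : kind (3 + i) = if (i < p)%N then 1%N else 2%N.
Proof. by rewrite /kind ltn_add2l. Qed.
Lemma neLR (k : 'I_3) (j : 'I_K) : (lshift K k == rshift 3 j) = false.
Proof. by apply/negbTE; rewrite -val_eqE /= neq_ltn (leq_trans (ltn_ord k)) ?leq_addr. Qed.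
Lemma neRL (k : 'I_3) (j : 'I_K) : (rshift 3 j == lshift K k) = false.
Proof. by rewrite eq_sym neLR. Qed.
Lemma kind_b1 : kind (bump 0 0) = 1%N. Proof. by []. Qed.
Lemma kind_b2 : kind (bump 0 (bump 0 0)) = 2%N. Proof. by []. Qed.
Lemma kind_0 : kind 0 = 0%N. Proof. by []. Qed.

Definition g (i j : nat) : {poly R} :=
  match i, j with
  | O, O => 'X | O, S O => - a%:P | O, S (S O) => - b%:P
  | S O, O => - (a *+ p.+1)%:P | S O, S O => 'X - (c0 *+ p)%:P
  | S (S O), O => - (b *+ q.+1)%:P | S (S O), S (S O) => 'X | _, _ => 0 end.

Lemma det_Mx : \det Mx = \det (\matrix_(i < 3, j < 3) g i j) * (('X + c0%:P) ^+ p * 'X ^+ q).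
Proof.
pose P12 : 'M[{poly R}]_(3, K) :=
  \matrix_(i, k) (if (k < p)%N then - ((i == 1%N :> nat)%:R) else - ((i == 2%N :> nat)%:R)).
pose P : 'M[{poly R}]_(3 + K) := block_mx 1%:M P12 0 1%:M.
pose Q : 'M[{poly R}]_(3 + K) := block_mx 1%:M (- P12) 0 1%:M.
have dP : \det P = 1 by rewrite det_ublock !det1 mulr1.
have dQ : \det Q = 1 by rewrite det_ublock !det1 mulr1.
have -> : \det Mx = \det (Q *m (Mx *m P)) by rewrite !det_mulmx dP dQ mul1r mulr1.
rewrite -[Mx]submxK /P /Q !mulmx_block !(mul1mx, mulmx1, mul0mx, mulmx0, addr0, add0r).
pose d : 'rV[{poly R}]_K := \row_k (if (k < p)%N then 'X + c0%:P else 'X).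
have E2 : dlsubmx Mx *m P12 + drsubmx Mx = diag_mx d.
  apply/matrixP => i j; rewrite !mxE !big_ord_recl big_ord0 !mxE /=.
  rewrite (inj_eq (@rshift_inj _ _)) !kindR kind_b1 kind_b2 kind_0.
  case: (ltnP i p) => hi; case: (ltnP j p) => hj; case: (eqVneq i j) => [eij|nij] //=; try subst i;
    rewrite ?hj ?ltnNge ?hj //=; rewrite ?polyCN ?polyC0; try ring; try (exfalso; lia).
rewrite E2.
have E1 : ulsubmx Mx *m P12 + ursubmx Mx + - P12 *m diag_mx d = 0.
  apply/matrixP => i j; rewrite mulNmx mul_mx_diag !mxE !big_ord_recl big_ord0 !mxE /=.
  rewrite !kindR kind_b1 kind_b2 kind_0.
  have ne : forall k : 'I_3, (lshift K k == rshift 3 j) = false.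
    by move=> k; apply/negbTE; rewrite -val_eqE /= neq_ltn (leq_trans (ltn_ord k)) ?leq_addr.
  rewrite !ne.
  case: (ltnP j p) => hj; case: i => [[|[|[|//]]] hi] /=; rewrite ?ne //=; rewrite ?polyC0; ring.
rewrite E1 det_lblock det_diag.
have -> : \prod_(i < K) d 0 i = ('X + c0%:P) ^+ p * 'X ^+ q.
  rewrite big_split_ord /=.
  rewrite (eq_bigr (fun _ => 'X + c0%:P)); last by move=> i _; rewrite mxE /= ltn_ord.
  rewrite (eq_bigr (fun _ => 'X)); last by move=> i _; rewrite mxE /= ltnNge leq_addr.
  by rewrite !prodr_const !card_ord.
congr (\det _ * _).
apply/matrixP => i j; rewrite !mxE big_split_ord /=.
rewrite [\sum_(k < p) _](eq_bigr (fun k => ((i == 1%N :> nat)%:R) * (- (W 1 (kind j))%:P))); last first.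
  by move=> k _; rewrite !mxE /= ltn_ord kindR ltn_ord neRL mulr0n /=; ring.
rewrite [\sum_(k < q) _](eq_bigr (fun k => ((i == 2%N :> nat)%:R) * (- (W 2 (kind j))%:P))); last first.
  move=> k _; rewrite !mxE /= ltnNge leq_addr kindR ltnNge leq_addr neRL mulr0n /=; ring.
rewrite !sumr_constI (inj_eq (@lshift_inj _ _)).
case: i => [[|[|[|//]]] hi]; case: j => [[|[|[|//]]] hj] /=; rewrite ?polyC0 ?polyCN ?polyCMn; try ring.
Qed.
End Mat.

Lemma char_poly_perm (R : comNzRingType) N (A : 'M[R]_N) (h : 'S_N) :
  char_poly (\matrix_(i, j) A (h i) (h j)) = char_poly A.
Proof.
rewrite /char_poly.
have -> : char_poly_mx (\matrix_(i, j) A (h i) (h j)) =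
   perm_mx h *m char_poly_mx A *m perm_mx h^-1.
  by rewrite -row_permE -col_permE; apply/matrixP => i j;
     rewrite !mxE (inj_eq perm_inj).
rewrite !det_mulmx !det_perm odd_permV mulrC mulrA.
by case: (odd_perm h); rewrite ?expr1 ?expr0 ?mulrNN !mul1r.
Qed.

Lemma char_poly_reindex (R : comNzRingType) (T : finType) (f : T -> T -> R)
  N m (t : 'I_N -> T) (s : 'I_m -> T) :
  injective t -> injective s -> N = m -> m = #|T| ->
  char_poly (\matrix_(i, j) f (t i) (t j)) = char_poly (\matrix_(i, j) f (s i) (s j)).
Proof.
move=> it iS eNm emT; subst m.
have [t' tK t'K] : bijective t by apply: inj_card_bij => //; rewrite card_ord emT.
have ih : injective (fun i => t' (s i)).
  by move=> i j /(congr1 t); rewrite !t'K => /iS.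
transitivity (char_poly (\matrix_(i, j) (\matrix_(i, j) f (t i) (t j) : 'M_N) (perm ih i) (perm ih j))).
  by rewrite char_poly_perm.
congr char_poly.
by apply/matrixP => i j; rewrite !mxE !permE /= !t'K.
Qed.

Section DS.
Local Open Scope group_scope.
Lemma D_struct m n : (2 < n)%N -> m = n.*2 -> exists x y : 'D_m,
  #[x]%g = n /\ y \notin <[x]>%g /\ (y ^+ 2 = 1)%g /\ (x ^ y = x^-1)%g
      /\ (forall g, g \in <[x]>%g \/ (g * y)%g \in <[x]>%g).
Proof.
move=> n2 ->.
have n1 : (1 < n)%N by lia.
have := isoGrp_hom (Grp_dihedral n1).
case/existsP => -[x y] /= /eqP[defG xn y2 xy].
have cD : #|'D_n.*2| = n.*2 by rewrite card_dihedral.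
have nXY : <[y]>%g \subset 'N(<[x]>)%g.
  by rewrite cycle_subG inE -cycleJ xy cycleV.
rewrite norm_joinEr // in defG.
have oxn : (#[x] %| n)%N by rewrite order_dvdn xn.
have oy2 : (#[y] %| 2)%N by rewrite order_dvdn y2.
have hc := mul_cardG <[x]>%G <[y]>%G.
rewrite /= defG cD in hc.
have xle : (#[x] <= n)%N by apply: dvdn_leq; lia.
have yle : (#[y] <= 2)%N by apply: dvdn_leq.
have I1 : (0 < #|<[x]>%g :&: <[y]>%g|)%N by apply/card_gt0P; exists 1%g; rewrite inE !group1.
have hc' : (#[x] * #[y] = 2 * n * #|<[x]> :&: <[y]>|)%N by rewrite hc mul2n.
have h2 : (2 * n <= #[x] * #[y])%N by rewrite hc' leq_pmulr.
have ox : #[x]%g = n.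
  apply/eqP; rewrite eqn_leq xle /=; rewrite leqNgt; apply/negP => lt.
  have : (#[x] * #[y] <= (n.-1) * 2)%N by apply: leq_mul => //; lia.
  lia.
have oy : #[y]%g = 2 by move: h2; rewrite ox; nia.
have I2 : #|<[x]>%g :&: <[y]>%g| = 1%N by move: hc'; rewrite ox oy; nia.
exists x, y; do !split => //.
- apply/negP => yX.
  have /eqP/cards1P [z Hz] := I2.
  have : y \in [set z] by rewrite -Hz inE yX cycle_id.
  have : 1 \in [set z] by rewrite -Hz inE !group1.
  rewrite !inE => /eqP <- /eqP y1.
  by move: oy; rewrite y1 order1.
- move=> g; have : g \in [set: 'D_n.*2] by [].
  rewrite -defG => /mulsgP[a b aX bY ->].
  have bY' : b \in <[y]> := bY; move: bY'; rewrite (cycle2g oy) !inE => /orP[] /eqP ->.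
    by left; rewrite mulg1.
  by right; rewrite -mulgA -expg2 y2 mulg1.
Qed.
End DS.

Section Dih.
Local Open Scope group_scope.
Variables (gT : finGroupType) (n : nat) (x y : gT).
Hypotheses (n2 : (2 < n)%N) (ox : #[x] = n) (yX : y \notin <[x]>) (y2 : y ^+ 2 = 1)
  (xy : x ^ y = x^-1) (cov : forall g, g \in <[x]> \/ g * y \in <[x]>)
  (cT : #|gT| = n.*2).
Local Notation X := <[x]>.

Lemma yV : y^-1 = y.
Proof. by apply/eqP; rewrite eq_invg_mul -expg2 y2. Qed.

Lemma zy z : z \in X -> z ^ y = z^-1.
Proof. by case/cycleP => k ->; rewrite conjXg xy expVgn. Qed.

Lemma refl2 g : g \notin X -> g * g = 1.
Proof.
move=> gX; have gyX : g * y \in X by case: (cov g) => //; rewrite (negbTE gX).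
have -> : g = (g * y) * y by rewrite -mulgA -expg2 y2 mulg1.
set z := g * y.
have zX : z \in X by [].
by rewrite -mulgA -{1}yV -/(conjg z y) zy // mulgV.
Qed.

Lemma cyc_refl g h : g \notin X -> h \in <[g]> -> (h == 1) || (h == g).
Proof.
move=> gX /cycleP[k ->].
have g2 : g ^+ 2 = 1 by rewrite expg2 refl2.
rewrite -(expg_mod k g2).
have : (k %% 2 < 2)%N by rewrite ltn_mod.
by case: (k %% 2)%N => [|[|//]] _; rewrite ?expg0 ?expg1 eqxx ?orbT.
Qed.

Lemma adjE g h : epg_adj g h = (g != h) && ((g \in X) && (h \in X) || (g == 1) || (h == 1)).
Proof.
rewrite /epg_adj; case: (eqVneq g h) => //= ngh.
apply/existsP/idP.
- case=> z /andP[gz hz]; case: (boolP (z \in X)) => zX.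
    have sub : <[z]> \subset X by rewrite cycle_subG.
    by rewrite (subsetP sub _ gz) (subsetP sub _ hz).
  move: (cyc_refl _ _ zX gz) (cyc_refl _ _ zX hz) => /orP[->|/eqP gE]; rewrite ?orbT //.
  case/orP=> [->|/eqP hE]; rewrite ?orbT //.
  by move: ngh; rewrite gE hE eqxx.
- case/orP => [/orP[/andP[gX hX] | /eqP g1] | /eqP h1].
  + by exists x; rewrite gX hX.
  + by exists h; rewrite g1 group1 cycle_id.
  + by exists g; rewrite h1 group1 cycle_id.
Qed.

Definition deg (g : gT) : nat := gdeg (@epg_adj gT) g.

Lemma degE g : deg g = if g == 1 then (n.*2).-1 else if g \in X then n.-1 else 1%N.
Proof.
rewrite /deg /gdeg.
case: (eqVneq g 1) => [->|g1].
  have -> : [set h | @epg_adj gT 1 h] = [set~ (1 : gT)].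
    by apply/setP => h; rewrite !inE adjE eqxx orbT andbT eq_sym.
  by rewrite cardsC1 cT.
case: (boolP (g \in X)) => gX.
  have -> : [set h | @epg_adj gT g h] = X :\ g.
    apply/setP => h; rewrite !inE adjE gX (negbTE g1) /= orbF eq_sym.
    by case: (eqVneq h 1) => [->|]; rewrite ?group1 ?orbT ?orbF.
  by move: (cardsD1 g X); rewrite gX -/#[x] ox add1n => ->.
have -> : [set h | @epg_adj gT g h] = [set 1].
  apply/setP => h; rewrite !inE adjE (negbTE gX) (negbTE g1) /=.
  by case: (eqVneq h 1) => [->|]; rewrite ?andbT ?andbF // eq_sym.
by rewrite cards1.
Qed.


Definition ee (i : nat) : nat := (if i == 2 then 0 else if i <= 1 then i else if i <= n then i.-1 else i - n)%N.
Definition rr (i : nat) : nat := (if i == 2 then 1 else if i <= n then 0 else 1)%N.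
Lemma ee_lt i : (i < n.*2 -> ee i < n)%N.
Proof. rewrite /ee; do !case: ifP; lia. Qed.
Lemma rr_le i : (rr i <= 1)%N.
Proof. rewrite /rr; do !case: ifP => _ //. Qed.
Lemma eer_inj i j : (i < n.*2 -> j < n.*2 -> ((ee i == ee j) && (rr i == rr j)) = (i == j))%N.
Proof. rewrite /ee /rr => hi hj; apply/idP/idP; do !case: ifP; lia. Qed.
Lemma kindE i : (i < n.*2)%N -> kind (n - 2) i =
   if (ee i == 0%N) && (rr i == 0%N) then 0%N else if rr i == 0%N then 1%N else 2%N.
Proof. rewrite /kind /ee /rr => hi; do !case: ifP => /=; try lia. Qed.

Definition sig i : gT := x ^+ ee i * y ^+ rr i.

Lemma xpow_eq a b : (a < n)%N -> (b < n)%N -> (x ^+ a == x ^+ b) = (a == b).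
Proof. by move=> ha hb; rewrite eq_expg_mod_order ox !modn_small. Qed.

Lemma xyeq a b r s : (a < n)%N -> (b < n)%N -> (r <= 1)%N -> (s <= 1)%N ->
  (x ^+ a * y ^+ r == x ^+ b * y ^+ s) = (a == b) && (r == s).
Proof.
move=> ha hb; case: r => [|[|//]] _; case: s => [|[|//]] _ /=;
  rewrite ?expg0 ?expg1 ?mulg1 ?(inj_eq (mulIg _)) ?xpow_eq ?andbT ?andbF //.
- apply/negbTE; apply/negP => /eqP E; move: yX; apply/negP; apply/negPn.
  have -> : y = (x ^+ b)^-1 * x ^+ a by rewrite E mulKg.
  by rewrite groupM ?groupV ?mem_cycle.
- apply/negbTE; apply/negP => /eqP E; move: yX; apply/negP; apply/negPn.
  have -> : y = (x ^+ a)^-1 * x ^+ b by rewrite -E mulKg.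
  by rewrite groupM ?groupV ?mem_cycle.
Qed.

Lemma sig_inj i j : (i < n.*2)%N -> (j < n.*2)%N -> (sig i == sig j) = (i == j).
Proof. by move=> hi hj; rewrite /sig xyeq ?ee_lt ?rr_le // eer_inj. Qed.

Definition kd (g : gT) : nat := if g == 1 then 0%N else if g \in X then 1%N else 2%N.

Lemma kd_sig i : (i < n.*2)%N -> kd (sig i) = kind (n - 2) i.
Proof.
move=> hi; rewrite kindE // /kd.
have -> : (sig i == 1) = (ee i == 0%N) && (rr i == 0%N).
  rewrite -[1 in LHS](mulg1 1) -{1}(expg0 x) -(expg0 y) /sig xyeq ?ee_lt ?rr_le //; lia.
have -> : (sig i \in X) = (rr i == 0%N).
  rewrite /sig groupMl ?mem_cycle //.
  by move: (rr_le i); case: (rr i) => [|[|//]] _ /=; rewrite ?expg0 ?group1 ?expg1 ?(negbTE yX).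
by [].
Qed.

Variable R : rcfType.
Local Open Scope ring_scope.
Definition fS (g h : gT) : R :=
  if epg_adj g h then Num.sqrt (((gdeg (@epg_adj gT) g) ^ 2)%:R + ((gdeg (@epg_adj gT) h) ^ 2)%:R) else 0.
Definition aa : R := Num.sqrt ((((n.*2).-1) ^ 2)%:R + ((n.-1) ^ 2)%:R).
Definition bb : R := Num.sqrt ((((n.*2).-1) ^ 2)%:R + (1 ^ 2)%:R).
Definition cc : R := Num.sqrt (((n.-1) ^ 2)%:R + ((n.-1) ^ 2)%:R).

Lemma fE g h : fS g h = if g == h then 0 else W R aa bb cc (kd g) (kd h).
Proof.
rewrite /fS adjE -!/(deg _) !degE /kd.
case: (eqVneq g h) => [<-|ngh] //=.
case: (eqVneq g 1%g) => [g1|g1]; case: (eqVneq h 1%g) => [h1|h1].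
- by move: ngh; rewrite g1 h1 eqxx.
- rewrite g1 group1 /= orbT.
  by case: (boolP (h \in X)) => hX /=; rewrite /aa /bb.
- rewrite h1 group1 /= !orbT.
  by case: (boolP (g \in X)) => gX /=; rewrite /aa /bb addrC.
- rewrite !orbF.
  by case: (boolP (g \in X)) => gX; case: (boolP (h \in X)) => hX /=.
Qed.

Theorem main_gen :
  let s2 : R := Num.sqrt 2 in
  let c : R := (n.-1)%:R * ((n - 2)%N)%:R * s2 in
  char_poly (@sombor_matrix R _ (@epg_adj gT))
  = ('X + ((n.-1)%:R * s2)%:P) ^+ (n - 2)%N * 'X ^+ (n.-1) *
    ('X ^+ 2 * ('X - c%:P)
     - ((n.-1)%:R * ((5 * n ^ 2 + 2 - 6 * n)%N)%:R)%:P * 'X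
     - (((2 * n * (2 * n ^ 2 + 1 - 2 * n))%N)%:R)%:P * ('X - c%:P)).
Proof.
move=> s2 c.
have hK : (3 + ((n - 2) + n.-1))%N = #|gT| by rewrite cT; lia.
transitivity (char_poly (\matrix_(i, j) fS (enum_val i) (enum_val j) : 'M[R]_#|gT|)); first by [].
have ltK (i : 'I_(3 + ((n - 2) + n.-1))) : (i < n.*2)%N by rewrite -cT -hK.
rewrite (@char_poly_reindex _ _ fS _ _ enum_val (fun i : 'I_(3 + ((n - 2) + n.-1)) => sig i)); first last.
- exact: hK.
- by rewrite hK.
- by move=> i j /eqP; rewrite sig_inj // => /eqP /val_inj.
- by move=> i j /enum_val_inj.
have E : char_poly_mx (\matrix_(i, j) fS (sig i) (sig j) : 'M[R]_(3 + ((n - 2) + n.-1)))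
     = Mx R (n - 2) (n.-1) aa bb cc.
  apply/matrixP => i j; rewrite !mxE fE sig_inj // !kd_sig //.
rewrite /char_poly E det_Mx det3 /=.
have Ec : cc = (n.-1)%:R * s2.
  rewrite /cc; have -> : ((n.-1) ^ 2)%:R + ((n.-1) ^ 2)%:R = (n.-1)%:R ^+ 2 * 2 :> R by rewrite natrX; ring.
  by rewrite /cc sqrtrM ?exprn_ge0 ?ler0n // sqrtr_sqr ger0_norm ?ler0n.
have Ea : ((5 * n ^ 2 + 2 - 6 * n)%N)%:R = aa ^+ 2 :> R.
  rewrite /aa sqr_sqrtr ?addr_ge0 ?ler0n // -natrD; congr (_%:R); lia.
have Eb : ((2 * n * (2 * n ^ 2 + 1 - 2 * n))%N)%:R = n%:R * bb ^+ 2 :> R.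
  rewrite /bb sqr_sqrtr ?addr_ge0 ?ler0n // -natrD -natrM; congr (_%:R); nia.
rewrite Ea Eb /c Ec.
have -> : n = (n - 2).+2 by lia.
set k := (n - 2)%N.
rewrite !subSS subn0 /=.
ring.
Qed.
End Dih.

Theorem corollary5p1 (R : rcfType) (n : nat) : (3 <= n)%N ->
  let s2 : R := Num.sqrt 2 in
  let c : R := (n.-1)%:R * ((n - 2)%N)%:R * s2 in
  char_poly (@sombor_matrix R _ (@epg_adj 'D_(2 * n)))
  = ('X + ((n.-1)%:R * s2)%:P) ^+ (n - 2)%N * 'X ^+ (n.-1) *
    ('X ^+ 2 * ('X - c%:P)
     - ((n.-1)%:R * ((5 * n ^ 2 + 2 - 6 * n)%N)%:R)%:P * 'X
     - (((2 * n * (2 * n ^ 2 + 1 - 2 * n))%N)%:R)%:P * ('X - c%:P)).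
Proof.
move=> n3.
have e2 : (2 * n = n.*2)%N by rewrite mul2n.
have [x [y [ox [yX [y2 [xy cov]]]]]] := D_struct _ _ n3 e2.
have cT : #|'D_(2 * n)| = n.*2.
  rewrite -cardsT.
  move: (2 * n)%N e2 x y ox yX y2 xy cov => m -> *.
  by rewrite card_dihedral //; lia.
exact: (@main_gen _ n x y n3 ox yX y2 xy cov cT R).
Qed.
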